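(* Let $N\ge1$, let $T$ be the rooted binary tree and $T_N$ the grafted binary tree. For every automorphism $g\in Aut(T)$ there exists an automorphism $\widehat g\in Aut(T_N)$ such that the homeomorphism of $\partial T$ induced by $g$ and the homeomorphism of $\partial T_N$ induced by $\widehat g$ are topologically conjugate.
   Context: The rooted binary tree $T$ has levels $V_i$, $|V_i|=2^i$, vertices labelled by words in $\{0,1\}^i$, with $w_1\cdots w_i$ joined to $w_1\cdots w_i0$ and $w_1\cdots w_i1$; $\partial T=\{0,1\}^{\mathbb N}$. The grafted binary tree $T_N$ has levels $V_0$ (the root), $V_1$ with $2^N$ vertices labelled $0,\ldots,2^N-1$ all joined to the root, and for $i\ge1$ each vertex $w_1\cdots w_i$ of $V_i$ joined to the two vertices $w_1\cdots w_i0$, $w_1\cdots w_i1$ of $V_{i+1}$; $\partial T_N=\{0,\ldots,2^N-1\}\times\prod_{i\ge2}\{0,1\}$ with the product topology. An automorphism of a tree is a bijection of vertices preserving adjacency (hence levels); it induces a homeomorphism of the boundary. *)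

(* Defs.v *)
From HB Require Import structures.
From mathcomp Require Import all_boot all_order all_algebra.
From mathcomp Require Import boolp classical_sets topology cantor.
Set Implicit Arguments. Unset Strict Implicit. Unset Printing Implicit Defensive.

Definition VT := seq bool.

Definition adjT (u v : VT) : Prop :=
  exists b : bool, v = rcons u b \/ u = rcons v b.

Definition is_autT (g : VT -> VT) : Prop :=
  bijective g /\ forall u v, adjT u v <-> adjT (g u) (g v).

Definition bdT := cantor_space.

Definition rayT (xi : bdT) (n : nat) : VT := mkseq xi n.

Definition induced_T (g : VT -> VT) (xi : bdT) : bdT :=
  fun n => nth false (g (rayT xi n.+1)) n.

(* ---------- the grafted binary tree T_N ----------
   vertices: None = the root; Some (a, w) = the vertex  a w_2 ... w_i  of
   level i = 1 + size w, where a : 'I_(2^N) is the level-1 label and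
   w = [:: w_2; ...; w_i] is a word over {0,1}. *)
Definition VTN (N : nat) := option ('I_(2 ^ N) * seq bool)%type.

Definition adjTN (N : nat) (u v : VTN N) : Prop :=
  match u, v with
  | None, Some (_, w) => w = [::]
  | Some (_, w), None => w = [::]
  | Some (a, w), Some (a', w') =>
      a = a' /\ exists b : bool, w' = rcons w b \/ w = rcons w' b
  | None, None => False
  end.

Definition is_autTN (N : nat) (g : VTN N -> VTN N) : Prop :=
  bijective g /\ forall u v, adjTN u v <-> adjTN (g u) (g v).

(* boundary dT_N = {0,...,2^N-1} x prod_{i>=2} {0,1}, product topology
   (discrete topology on the first factor); the second component xi.2 is
   indexed from 0, i.e. xi.2 k is the letter at level k+2. *)
Definition bdTN (N : nat) := (discrete_topology 'I_(2 ^ N) * cantor_space)%type.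

Definition rayTN (N : nat) (xi : bdTN N) (n : nat) : VTN N :=
  match n with
  | 0 => None
  | k.+1 => Some (xi.1, mkseq xi.2 k)
  end.

Definition induced_TN (N : nat) (g : VTN N -> VTN N) (xi : bdTN N) : bdTN N :=
  (match g (rayTN xi 1) with Some (a, _) => a | None => xi.1 end,
   fun k => match g (rayTN xi k.+2) with
            | Some (_, w) => nth false w k
            | None => false
            end).

Definition homeomorphism (X Y : topologicalType) (h : X -> Y) : Prop :=
  exists k : Y -> X,
    [/\ cancel h k, cancel k h, continuous h & continuous k].

Definition top_conjugate (X Y : topologicalType) (f : X -> X) (f' : Y -> Y)
  : Prop :=
  exists h : X -> Y, homeomorphism h /\ h \o f = f' \o h.

(* Main.v *)
Require Import Defs.
From mathcomp Require Import all_boot all_order all_algebra.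
From mathcomp Require Import boolp classical_sets topology cantor.

Local Open Scope classical_set_scope.

Lemma coord_cont (i : nat) : continuous (fun xi : cantor_space => xi i).
Proof. exact: (@proj_continuous nat (fun _ => bool) i). Qed.

Lemma into_cantor (X : topologicalType) (f : X -> cantor_space) :
  (forall t, continuous (fun x => f x t)) -> continuous f.
Proof.
move=> H x.
apply/(@pointwise_cvgP nat bool (f @ x) (f x)) => t.
exact: (H t x).
Qed.

Lemma near_coord (xi : cantor_space) i : \forall y \near xi, y i = xi i.
Proof.
have := coord_cont i xi. move=> /(_ [set xi i]).
apply. exact: discrete_set1.
Qed.

Lemma near_prefix (xi : cantor_space) n :
  \forall y \near xi, forall i, (i < n)%N -> y i = xi i.
Proof.
elim: n => [|n IH].
  by apply: (@filterS _ _ _ setT) => //; apply: filterT.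
near=> y.
have Hy : forall i, (i < n)%N -> y i = xi i by near: y.
have Hn : y n = xi n by near: y; exact: near_coord.
move=> i; rewrite ltnS leq_eqVlt => /orP[/eqP ->|] //; exact: Hy.
Unshelve. all: end_near.
Qed.

Lemma discrete_dom_cont (D : choiceType) (Y : topologicalType) (f : discrete_topology D -> Y) :
  continuous f.
Proof.
move=> x; apply: (@cvg_near_cst _ _ (f x) f (nbhs x) _).
have H : nbhs x [set x] := discrete_set1 x.
apply: (@filterS _ (nbhs x) _ [set x]) => //; by move=> y ->.
Qed.

Lemma fst_cont (X Y Z : topologicalType) (F : X -> Z) :
  continuous F -> continuous (fun q : X * Y => F q.1).
Proof.
move=> cF [a b].
exact: (cvg_comp _ _ (@cvg_fst _ _ (nbhs a) (nbhs b) _) (cF a)).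
Qed.

Lemma snd_cont (X Y Z : topologicalType) (F : Y -> Z) :
  continuous F -> continuous (fun q : X * Y => F q.2).
Proof.
move=> cF [a b].
exact: (cvg_comp _ _ (@cvg_snd _ _ (nbhs a) (nbhs b) _) (cF b)).
Qed.

Lemma pair_cont (X Y Z : topologicalType) (F : X -> Y) (G : X -> Z) :
  continuous F -> continuous G -> continuous (fun x => (F x, G x)).
Proof.
move=> cF cG x.
exact: (cvg_pair (cF x) (cG x)).
Qed.

Local Close Scope classical_set_scope.
Set Implicit Arguments. Unset Strict Implicit. Unset Printing Implicit Defensive.

Lemma adj_root u : adjT u [::] -> exists b, u = [:: b].
Proof.
case=> b [|->]; last by exists b.
by case: u => [|x u] //=; rewrite /rcons; case: u.
Qed.

Lemma rcons_nil (u : seq bool) b : rcons u b <> [::].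
Proof. by case: u. Qed.

Lemma aut_inv f : is_autT f -> exists fi, [/\ is_autT fi, cancel f fi & cancel fi f].
Proof.
case=> [[fi c1 c2] H]; exists fi; split => //; split.
  by exists f.
by move=> u v; have := H (fi u) (fi v); rewrite !c2 => h; split => /h.
Qed.

Lemma aut_root f : is_autT f -> f [::] = [::].
Proof.
move=> hf; have [fi [[_ Hi] c1 c2]] := aut_inv hf.
move Ef: (f [::]) => v; case/lastP: v Ef => [//|p c] E.
have A : forall x, adjT x (f [::]) -> exists b, fi x = [:: b].
  move=> x ax; apply: adj_root.
  by rewrite -[X in adjT _ X](c1 [::]); exact: ((Hi x (f [::])).1 ax).
have [b1 E1] : exists b, fi p = [:: b] by apply: A; rewrite E; exists c; left.
have [b2 E2] : exists b, fi (rcons (rcons p c) false) = [:: b].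
  by apply: A; rewrite E; exists false; right.
have [b3 E3] : exists b, fi (rcons (rcons p c) true) = [:: b].
  by apply: A; rewrite E; exists true; right.
have inj : injective fi by apply: can_inj c2.
have s1 : forall b, p <> rcons (rcons p c) b.
  by move=> b /(congr1 size); rewrite !size_rcons => /eqP; rewrite -[X in X == _]addn0 -addn2 eqn_add2l.
have s2 : rcons (rcons p c) false <> rcons (rcons p c) true by move=> h; have := congr1 (last true) h; rewrite !last_rcons.
move: E1 E2 E3; case: b1; case: b2; case: b3 => E1 E2 E3; exfalso.
all: first [ by apply: (s1 false); apply: inj; rewrite E1 E2
           | by apply: (s1 true); apply: inj; rewrite E1 E3
           | by apply: s2; apply: inj; rewrite E2 E3 ].
Qed.

Section Aut.
Variable g : VT -> VT.
Hypothesis hg : is_autT g.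

Lemma ginj : injective g.
Proof. by case: hg => [[gi c1 _] _]; apply: can_inj c1. Qed.

Lemma adj_child u b : adjT (g u) (g (rcons u b)).
Proof. by apply (proj2 hg u (rcons u b)).1; exists b; left. Qed.

Lemma g_child u b : exists c, g (rcons u b) = rcons (g u) c.
Proof.
elim/last_ind: u b => [|u' b0 IH] b;
  [case: (adj_child [::] b) | case: (adj_child (rcons u' b0) b)] => c [E|E]; try by exists c.
  by exfalso; move: E; rewrite (aut_root hg) => /esym/rcons_nil.
exfalso; have [c0 E0] := IH b0; rewrite E0 in E.
have [/ginj E2 _] := rcons_inj E.
move: E2 => /(congr1 size); rewrite !size_rcons => /eqP.
by rewrite -[X in X == _]addn0 -addn2 eqn_add2l.
Qed.

Lemma g_size u : size (g u) = size u.
Proof.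
elim/last_ind: u => [|u b IH]; first by rewrite (aut_root hg).
by have [c ->] := g_child u b; rewrite !size_rcons IH.
Qed.

Lemma g_take k u : g (take k u) = take k (g u).
Proof.
elim/last_ind: u => [|u b IH]; first by rewrite (aut_root hg).
have [c Ec] := g_child u b; rewrite Ec.
rewrite -!cats1 !take_cat g_size.
case: ltnP => hk; first exact: IH.
case: (k - size u) => [|m] /=; first by rewrite !cats0.
by rewrite !cats1 Ec.
Qed.

Lemma g_prefix u w : take (size u) (g (u ++ w)) = g u.
Proof. by rewrite -g_take take_size_cat. Qed.

End Aut.

Section Enc.
Variable N : nat.
Let E : #|{: N.-tuple bool}| = 2 ^ N.
Proof. by rewrite card_tuple card_bool. Qed.

Definition dec (a : 'I_(2 ^ N)) : seq bool := val (enum_val (cast_ord (esym E) a)).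
Definition enc (u : seq bool) : 'I_(2 ^ N) :=
  cast_ord E (enum_rank (insubd (nseq_tuple N false) u)).

Lemma size_dec a : size (dec a) = N.
Proof. by rewrite /dec size_tuple. Qed.

Lemma decK : cancel dec enc.
Proof. by move=> a; rewrite /enc /dec valKd enum_valK cast_ordKV. Qed.

Lemma encK u : size u = N -> dec (enc u) = u.
Proof.
move=> su; rewrite /enc /dec cast_ordK enum_rankK val_insubd.
by rewrite su eqxx.
Qed.
End Enc.

Section Lift.
Variable N : nat.

Definition PP (p : 'I_(2 ^ N) * seq bool) : seq bool := dec p.1 ++ p.2.
Definition QQ (x : seq bool) : 'I_(2 ^ N) * seq bool := (enc N (take N x), drop N x).

Lemma PQ x : (N <= size x)%N -> PP (QQ x) = x.
Proof.
move=> h; rewrite /PP /QQ /= encK ?cat_take_drop //.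
by rewrite size_take; case: ltnP h => // h1 h2; apply/eqP; rewrite eqn_leq h1 h2.
Qed.

Lemma QP p : QQ (PP p) = p.
Proof.
case: p => a w; rewrite /PP /QQ /= take_size_cat ?drop_size_cat ?size_dec //.
by rewrite decK.
Qed.

Lemma size_PP p : size (PP p) = (N + size p.2)%N.
Proof. by rewrite /PP size_cat size_dec. Qed.

Definition liftg (f : VT -> VT) : VTN N -> VTN N :=
  fun v => match v with None => None | Some p => Some (QQ (f (PP p))) end.

Lemma adjP p q : adjTN (Some p) (Some q) <-> adjT (PP p) (PP q).
Proof.
case: p q => [a w] [a' w'] /=; rewrite /PP /=; split.
  by case=> <- [b [->|->]]; exists b; [left|right]; rewrite rcons_cat.
case=> b [] e; rewrite rcons_cat in e;
  have e1 := congr1 (take N) e; have e2 := congr1 (drop N) e;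
  move: e1 e2; rewrite !take_size_cat ?drop_size_cat ?size_dec // => e1 e2.
- by split; [apply: (can_inj (@decK N)) | exists b; left].
- by split; [apply: (can_inj (@decK N)) | exists b; right].
Qed.

Lemma liftg_aut g : is_autT g -> is_autTN (liftg g).
Proof.
move=> hg; have [gi [hgi c1 c2]] := aut_inv hg.
split.
  exists (liftg gi) => [[p|]|[p|]] //=; congr Some.
    by rewrite PQ ?c1 ?QP // g_size // size_PP leq_addr.
  by rewrite PQ ?c2 ?QP // g_size // size_PP leq_addr.
have sz : forall p, size (g (PP p)) = (N + size p.2)%N.
  by move=> p; rewrite g_size // size_PP.
move=> [p|] [q|].
- have h1 := adjP p q; have h2 := adjP (QQ (g (PP p))) (QQ (g (PP q))).
  move: h2; rewrite !PQ ?sz ?leq_addr // => h2.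
  change (adjTN (Some p) (Some q) <-> adjTN (Some (QQ (g (PP p)))) (Some (QQ (g (PP q))))).
  move: (proj2 hg (PP p) (PP q)); tauto.
- case: p => a w /=; have s := sz (a, w); split => e.
    by apply/eqP; rewrite -size_eq0 size_drop s e addn0 subnn.
  by apply/eqP; rewrite -size_eq0; have := congr1 size e; rewrite size_drop s addKn => /= ->.
- case: q => a w /=; have s := sz (a, w); split => e.
    by apply/eqP; rewrite -size_eq0 size_drop s e addn0 subnn.
  by apply/eqP; rewrite -size_eq0; have := congr1 size e; rewrite size_drop s addKn => /= ->.
- by [].
Qed.
End Lift.

Lemma rayT_induced g : is_autT g -> forall xi n, rayT (induced_T g xi) n = g (rayT xi n).
Proof.
move=> hg xi n; apply: (@eq_from_nth _ false).
  by rewrite size_mkseq g_size // size_mkseq.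
move=> i; rewrite size_mkseq => hi.
rewrite nth_mkseq // /induced_T.
have -> : rayT xi i.+1 = take i.+1 (rayT xi n).
  by rewrite /rayT /mkseq -map_take take_iota (minn_idPl hi).
by rewrite g_take // nth_take.
Qed.

Lemma mkseq_cat (xi : nat -> bool) N m :
  mkseq xi N ++ mkseq (fun k => xi (N + k)) m = mkseq xi (N + m).
Proof.
rewrite /mkseq iotaD map_cat; congr (_ ++ _); have -> : iota (0 + N) m = iota (N + 0) m by rewrite addn0.
by rewrite iotaDl -map_comp.
Qed.

Section Conj.
Variable N : nat.

Definition hmap (xi : bdT) : bdTN N := (enc N (mkseq xi N), fun k => xi (N + k)).
Definition kmap (p : bdTN N) : bdT :=
  fun n => if (n < N)%N then nth false (dec p.1) n else p.2 (n - N).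

Lemma hmap_homeo : homeomorphism hmap.
Proof.
exists kmap; split.
- move=> xi; apply: funext => n; rewrite /kmap /hmap /=.
  case: ltnP => h; first by rewrite encK ?size_mkseq // nth_mkseq.
  by rewrite subnKC.
- case=> a eta; rewrite /kmap /hmap /=; congr pair.
    have -> : mkseq (fun n => if (n < N)%N then nth false (dec a) n else eta (n - N)) N = dec a.
      apply: (@eq_from_nth _ false); first by rewrite size_mkseq size_dec.
      by move=> i; rewrite size_mkseq => hi; rewrite nth_mkseq // hi.
    exact: decK.
  apply: funext => k; rewrite ltnNge leq_addr /=; congr eta; exact: addKn.
- apply: pair_cont.
    move=> x; apply: (@cvg_near_cst _ (discrete_topology _) (enc N (mkseq x N)) (fun y : bdT => enc N (mkseq y N)) (nbhs x) _).
    apply: filterS (near_prefix x N) => y hy; congr enc.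
    by rewrite /mkseq; apply/eq_in_map => i; rewrite mem_iota add0n => /andP[_ /hy].
  apply: into_cantor => t; exact: (coord_cont (N + t)).
- apply: into_cantor => n; rewrite /kmap; case: (ltnP n N) => h.
    apply: (@fst_cont (discrete_topology 'I_(2 ^ N)) cantor_space bool (fun a => nth false (dec a) n)).
    exact: discrete_dom_cont.
  apply: (@snd_cont (discrete_topology 'I_(2 ^ N)) cantor_space bool (fun eta => eta (n - N))).
  exact: coord_cont.
Qed.
End Conj.

Theorem lemma2p5 (N : nat) (hN : (1 <= N)%N) (g : VT -> VT) :
  is_autT g ->
  exists gh : VTN N -> VTN N,
    is_autTN gh /\
    top_conjugate (X := bdT) (Y := bdTN N) (induced_T g) (induced_TN gh).
Proof.
move=> hg; exists (@liftg N g); split; first exact: liftg_aut.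
exists (@hmap N); split; first exact: hmap_homeo.
apply: funext => xi /=.
rewrite /hmap /induced_TN /=; congr pair.
  rewrite /PP /= encK ?size_mkseq // cats0.
  have := rayT_induced hg xi N; rewrite /rayT => <-.
  by rewrite take_oversize ?size_mkseq.
apply: funext => k; rewrite /PP /= encK ?size_mkseq // mkseq_cat nth_drop.
have := rayT_induced hg xi (N + k.+1); rewrite /rayT => <-.
by rewrite nth_mkseq // ltn_add2l.
Qed.
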